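(* Let $\boldsymbol{X}$ be a saturated $\boldsymbol{\mathcal{L}}_\Lambda$ modal space with $\Lambda$ logically compact, let $\boldsymbol{f}$ be a clean map on $\boldsymbol{X}$ and let $d\in\mathcal{D}_{\boldsymbol{X}}$. Then for every $\boldsymbol{x}\in\boldsymbol{X}$ the limit set $\omega_{\boldsymbol{f}}(\boldsymbol{x})$ of $\boldsymbol{x}$ under $\boldsymbol{f}$ in $\boldsymbol{X}_d$ is non-empty.
   Context: Setting: countable atom set $\Phi$, finite agent set $I$, modal language $\mathcal{L}$ ($\varphi::=\top\mid p\mid\neg\varphi\mid\varphi\wedge\varphi\mid\square_i\varphi$), logic $\Lambda$ a normal modal logic extending $K$, $\boldsymbol{\mathcal{L}}_\Lambda$ the set of $\Lambda$-equivalence classes $\boldsymbol{\varphi}$ of formulas. $\Lambda$ is compact if a set of formulas is $\Lambda$-consistent iff all finite subsets are. Kripke models have countable nonempty state sets; pointed models evaluated standardly. For a set $X$ of pointed Kripke models, $\boldsymbol{X}=\{\boldsymbol{x}:x\in X\}$, $\boldsymbol{x}=\{y\in X:y,x \text{ satisfy the same formulas}\}$; $\boldsymbol{X}$ is saturated if every $\Lambda$-consistent set of formulas is satisfied by some $x\in X$. Metrics $\mathcal{D}_{\boldsymbol{X}}$: for $D\subseteq\boldsymbol{\mathcal{L}}_\Lambda$ such that for every $\boldsymbol{\psi}$ there is finite $D_\psi\subseteq D$ with any $x,y\in X$ satisfying the same elements of $D_\psi$ agreeing on $\psi$, enumerated $\boldsymbol{\varphi}_1,\boldsymbol{\varphi}_2,\ldots$,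 and $w:D\to\mathbb{R}_{>0}$ with $\sum_kw(\boldsymbol{\varphi}_k)<\infty$, $d_w(\boldsymbol{x},\boldsymbol{y})=\sum_k w(\boldsymbol{\varphi}_k)d_k(\boldsymbol{x},\boldsymbol{y})$ with $d_k=0$ if $x,y$ agree on $\varphi_k$ and $1$ otherwise. $\boldsymbol{X}_d$ is $\boldsymbol{X}$ with metric $d$. Clean map: induced via product update $x\mapsto x\otimes\Sigma\Gamma$ by a multi-pointed action model $\Sigma\Gamma=(\llbracket\Sigma\rrbracket,\mathsf{R},pre,post,\Gamma)$ (countable action set, relations $\mathsf{R}_i$, preconditions in $\mathcal{L}$, postconditions $\top$ or conjunctions of literals, designated set $\emptyset\ne\Gamma$) that is precondition finite (finitely many $\boldsymbol{pre(\sigma)}$), exhaustive (each $x\in X$ satisfies some $pre(\sigma)$, $\sigma\in\Gamma$), deterministic (no $x\in X$ satisfies two distinct designated preconditions) and closing ($x\otimes\Sigma\Gamma\in X$) over $X$; product update has states $(s,\sigma)$ with $Ms\vDash pre(\sigma)$, relations componentwise, atoms set by postconditions (true if $post(\sigma)\vDash p$, kept from $s$ unless $post(\sigma)\vDash\neg p$), and designated state $(s,\sigma)$ for the unique applicable $\sigma\in\Gamma$. $\boldsymbol{f}(\boldsymbol{x})$ is the class of $x\otimes\Sigma\Gamma$. A point $\boldsymbol{y}$ is a limit point of $\boldsymbol{x}$ under $\boldsymbol{f}$ if some subsequence $\boldsymbol{f}^{n_1}(\boldsymbol{x}),\boldsymbol{f}^{n_2}(\boldsymbol{x}),\dots$ ($n_1<n_2<\dots$)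 converges to $\boldsymbol{y}$; $\omega_{\boldsymbol{f}}(\boldsymbol{x})$ is the set of limit points. *)

(* Defs.v *)
From Stdlib Require Import Reals List Arith Cantor ClassicalEpsilon.
From Coquelicot Require Import Coquelicot.
Set Implicit Arguments.
Open Scope R_scope.

Definition countable (T : Type) : Prop :=
  exists g : T -> nat, forall a b, g a = g b -> a = b.
Definition finite_type (T : Type) : Prop :=
  exists l : list T, forall i, In i l.

Inductive form (A I : Type) : Type :=
| Top : form A I
| Var : A -> form A I
| Neg : form A I -> form A I
| And : form A I -> form A I -> form A I
| Box : I -> form A I -> form A I.
Arguments Top {A I}.
Arguments Var {A I} _.
Arguments Neg {A I} _.
Arguments And {A I} _ _.
Arguments Box {A I} _ _.

Definition Imp {A I} (f g : form A I) : form A I := Neg (And f (Neg g)).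
Definition Iff {A I} (f g : form A I) : form A I := And (Imp f g) (Imp g f).
Definition conj_list {A I} (l : list (form A I)) : form A I := fold_right (@And A I) Top l.

Record kmodel (A I : Type) := {
  st : Type;
  st_count : countable st;
  rel : I -> st -> st -> Prop;
  val : A -> st -> Prop }.

Record pmodel (A I : Type) := { pm : kmodel A I; pt : st pm }.

Fixpoint sat {A I} (M : kmodel A I) (s : st M) (f : form A I) : Prop :=
  match f with
  | Top => True
  | Var p => val M p s
  | Neg g => ~ sat M s g
  | And g h => sat M s g /\ sat M s h
  | Box i g => forall t, rel M i s t -> sat M t g
  end.

Definition psat {A I} (x : pmodel A I) (f : form A I) : Prop := sat (pm x) (pt x) f.

Definition bool_hom {A I} (v : form A I -> bool) : Prop :=
  v Top = true /\ (forall f, v (Neg f) = negb (v f)) /\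
  (forall f g, v (And f g) = andb (v f) (v g)).

(** propositional tautology (instances): true under every Boolean valuation
    treating atoms and boxed formulas as propositional variables *)
Definition taut {A I} (f : form A I) : Prop := forall v, bool_hom v -> v f = true.

Fixpoint subst {A I} (s : A -> form A I) (f : form A I) : form A I :=
  match f with
  | Top => Top
  | Var p => s p
  | Neg g => Neg (subst s g)
  | And g h => And (subst s g) (subst s h)
  | Box i g => Box i (subst s g)
  end.

Definition normal_logic {A I} (L : form A I -> Prop) : Prop :=
  (forall f, taut f -> L f) /\
  (forall i f g, L (Imp (Box i (Imp f g)) (Imp (Box i f) (Box i g)))) /\
  (forall f g, L (Imp f g) -> L f -> L g) /\
  (forall i f, L f -> L (Box i f)) /\
  (forall s f, L f -> L (subst s f)).

Definition Lequiv {A I} (L : form A I -> Prop) (f g : form A I) : Prop := L (Iff f g).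

Definition consistent {A I} (L : form A I -> Prop) (G : form A I -> Prop) : Prop :=
  ~ exists l : list (form A I), (forall f, In f l -> G f) /\ L (Neg (conj_list l)).

Definition logically_compact {A I} (L : form A I -> Prop) : Prop :=
  forall G : form A I -> Prop,
    consistent L G <->
    (forall l : list (form A I), (forall f, In f l -> G f) ->
       consistent L (fun f => In f l)).

Definition modal_space {A I} (L : form A I -> Prop) (X : pmodel A I -> Prop) : Prop :=
  forall x, X x -> forall f, L f -> psat x f.

Definition saturated {A I} (L : form A I -> Prop) (X : pmodel A I -> Prop) : Prop :=
  forall G, consistent L G -> exists x, X x /\ forall f, G f -> psat x f.

(** * The metrics d_w in D_X.
    D is given by an enumeration e : nat -> option form (None = no element,
    allowing finite D), injective on Lambda-classes. *)
Definition disagree {A I} (x y : pmodel A I) (f : form A I) : R :=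
  if excluded_middle_informative (psat x f <-> psat y f) then 0 else 1.

Definition in_D {A I} (L : form A I -> Prop) (X : pmodel A I -> Prop)
    (e : nat -> option (form A I)) (w : nat -> R) : Prop :=
  (forall k l f g, e k = Some f -> e l = Some g -> Lequiv L f g -> k = l) /\
  (forall psi, exists K : list nat,
      (forall k, In k K -> e k <> None) /\
      forall x y, X x -> X y ->
        (forall k f, In k K -> e k = Some f -> (psat x f <-> psat y f)) ->
        (psat x psi <-> psat y psi)) /\
  (forall k, e k <> None -> 0 < w k) /\
  ex_series (fun k => match e k with Some _ => w k | None => 0 end).

Definition dist {A I} (e : nat -> option (form A I)) (w : nat -> R)
    (x y : pmodel A I) : R :=
  Series (fun k => match e k with Some f => w k * disagree x y f | None => 0 end).

Inductive lit_conj {A I} : form A I -> Prop :=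
| lc_pos : forall p, lit_conj (Var p)
| lc_neg : forall p, lit_conj (Neg (Var p))
| lc_and : forall f g, lit_conj f -> lit_conj g -> lit_conj (And f g).

Definition is_post {A I} (f : form A I) : Prop := f = Top \/ lit_conj f.

Record amodel (A I : Type) := {
  act : Type;
  act_count : countable act;
  arel : I -> act -> act -> Prop;
  pre : act -> form A I;
  post : act -> form A I;
  desig : act -> Prop }.

Definition entails {A I} (f g : form A I) : Prop :=
  forall y : pmodel A I, psat y f -> psat y g.

Definition pstate {A I} (E : amodel A I) (M : kmodel A I) : Type :=
  { p : st M * act E | sat M (fst p) (pre E (snd p)) }.

Lemma pstate_count {A I} (E : amodel A I) (M : kmodel A I) : countable (pstate E M).
Proof.
  destruct (st_count M) as [g1 H1]. destruct (act_count E) as [g2 H2].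
  exists (fun q => Cantor.to_nat (g1 (fst (proj1_sig q)), g2 (snd (proj1_sig q)))).
  intros q1 q2 Heq.
  apply (f_equal Cantor.of_nat) in Heq. rewrite !Cantor.cancel_of_to in Heq.
  injection Heq as E1 E2. apply H1 in E1. apply H2 in E2.
  destruct q1 as [[s a] Ha], q2 as [[t b] Hb]; simpl in *. subst.
  f_equal. apply proof_irrelevance.
Qed.

Definition prod_model {A I} (E : amodel A I) (M : kmodel A I) : kmodel A I := {|
  st := pstate E M;
  st_count := pstate_count E M;
  rel := fun i a b => rel M i (fst (proj1_sig a)) (fst (proj1_sig b)) /\
                      arel E i (snd (proj1_sig a)) (snd (proj1_sig b));
  val := fun p a => entails (post E (snd (proj1_sig a))) (Var p) \/
                    (val M p (fst (proj1_sig a)) /\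
                     ~ entails (post E (snd (proj1_sig a))) (Neg (Var p))) |}.

(** x (x) Sigma Gamma; designated state (s, sigma) for the (unique, under
    determinism) applicable designated sigma; x itself if none applies
    (never happens for x in X when the action model is exhaustive). *)
Definition upd {A I} (E : amodel A I) (x : pmodel A I) : pmodel A I :=
  match excluded_middle_informative
          (exists a, desig E a /\ sat (pm x) (pt x) (pre E a)) with
  | left H =>
      let (a, Ha) := constructive_indefinite_description _ H in
      {| pm := prod_model E (pm x);
         pt := exist (fun p : st (pm x) * act E => sat (pm x) (fst p) (pre E (snd p)))
                     (pt x, a) (proj2 Ha) |}
  | right _ => x
  end.

Definition clean {A I} (L : form A I -> Prop) (X : pmodel A I -> Prop) (E : amodel A I) : Prop :=
  (forall a, is_post (post E a)) /\
  (exists a, desig E a) /\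
  (exists l : list (form A I), forall a, exists f, In f l /\ Lequiv L (pre E a) f) /\
  (forall x, X x -> exists a, desig E a /\ psat x (pre E a)) /\
  (forall x, X x -> forall a b, desig E a -> desig E b ->
       psat x (pre E a) -> psat x (pre E b) -> a = b) /\
  (forall x, X x -> X (upd E x)).

Definition limit_point {A I} (e : nat -> option (form A I)) (w : nat -> R)
    (E : amodel A I) (x y : pmodel A I) : Prop :=
  exists n : nat -> nat, (forall k, (n k < n (S k))%nat) /\
    is_lim_seq (fun k => dist e w (Nat.iter (n k) (upd E) x) y) 0.

(* Main.v *)
Require Import Defs.
From Stdlib Require Import Reals.
From Coquelicot Require Import Coquelicot.
From Stdlib Require Import List Arith Lia Lra ClassicalEpsilon Classical.

Definition Inf (P : nat -> Prop) := forall N, exists j, (N <= j)%nat /\ P j.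

Lemma inf_split (P Q : nat -> Prop) : Inf P ->
  Inf (fun j => P j /\ Q j) \/ Inf (fun j => P j /\ ~ Q j).
Proof.
  intros HP. destruct (classic (Inf (fun j => P j /\ Q j))) as [H|H]; [left; exact H|right].
  unfold Inf in H. apply not_all_ex_not in H. destruct H as [N0 HN0].
  intro N. destruct (HP (max N N0)) as [j [Hj Pj]]. exists j. split; [lia|].
  split; [exact Pj|]. intro Qj. apply HN0. exists j. split; [lia|auto].
Qed.

Definition agree (a : nat -> nat -> bool) (c : nat -> bool) k j :=
  forall i, (i < k)%nat -> a j i = c i.

Definition step a c k : bool :=
  if excluded_middle_informative (Inf (fun j => agree a c k j /\ a j k = true))
  then true else false.

Fixpoint bs a k : nat -> bool :=
  match k with
  | 0 => fun _ => false
  | S k' => fun i => if Nat.eq_dec i k' then step a (bs a k') k' else bs a k' i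
  end.

Definition bl a i := bs a (S i) i.

Lemma bs_stable a k i : (i < k)%nat -> bs a k i = bl a i.
Proof.
  induction k; intros H; [lia|]. simpl. destruct (Nat.eq_dec i k).
  - subst. unfold bl. simpl. destruct (Nat.eq_dec k k); [reflexivity|congruence].
  - apply IHk. lia.
Qed.

Lemma inv a k : Inf (agree a (bl a) k).
Proof.
  induction k.
  - intro N. exists N. split; [lia|]. intros i Hi; lia.
  - assert (Hb : bl a k = step a (bs a k) k).
    { unfold bl. simpl. destruct (Nat.eq_dec k k); [reflexivity|congruence]. }
    assert (Heq : forall j, agree a (bs a k) k j <-> agree a (bl a) k j).
    { intro j; split; intros H i Hi; rewrite (H i Hi); [|symmetry]; apply bs_stable; auto. }
    unfold step in Hb.
    destruct (excluded_middle_informative _) as [Ht|Hf].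
    + intro N. destruct (Ht N) as [j [Hj [H1 H2]]]. exists j. split; auto.
      intros i Hi. destruct (Nat.eq_dec i k).
      * subst. congruence.
      * apply Heq; auto. lia.
    + destruct (inf_split (fun j => agree a (bl a) k j) (fun j => a j k = true) IHk) as [H|H].
      * exfalso. apply Hf. intro N. destruct (H N) as [j [Hj [H1 H2]]].
        exists j. split; auto. split; auto. apply Heq; auto.
      * intro N. destruct (H N) as [j [Hj [H1 H2]]]. exists j. split; auto.
        intros i Hi. destruct (Nat.eq_dec i k).
        -- subst. rewrite Hb. destruct (a j k); congruence.
        -- apply H1. lia.
Qed.

Definition pick a k N : nat :=
  proj1_sig (constructive_indefinite_description _ (inv a k N)).

Lemma pick_spec a k N : (N <= pick a k N)%nat /\ agree a (bl a) k (pick a k N).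
Proof. unfold pick. destruct (constructive_indefinite_description _ _). simpl. auto. Qed.

Fixpoint nn a m : nat :=
  match m with
  | 0 => pick a 1 0
  | S m' => pick a (S (S m')) (S (nn a m'))
  end.

Lemma subseq a : exists n : nat -> nat, (forall m, (n m < n (S m))%nat) /\
  forall m k, (k <= m)%nat -> a (n m) k = bl a k.
Proof.
  exists (nn a). split.
  - intro m. simpl. destruct (pick_spec a (S (S m)) (S (nn a m))). lia.
  - intros m k Hk. destruct m; simpl.
    + apply (proj2 (pick_spec a 1 0)). lia.
    + apply (proj2 (pick_spec a (S (S m)) (S (nn a m)))). lia.
Qed.

Lemma psat_conj {A I} (x : pmodel A I) l :
  (forall f, In f l -> psat x f) -> psat x (conj_list l).
Proof.
  induction l; intros H; unfold psat in *; simpl; auto.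
  split; [apply H; simpl; auto|]. apply IHl. intros f Hf. apply H. simpl; auto.
Qed.

Lemma seq_limit {A I} (L : form A I -> Prop) (X : pmodel A I -> Prop)
  (HX : modal_space L X) (Hsat : saturated L X)
  (e : nat -> option (form A I)) (w : nat -> R) (Hd : in_D L X e w)
  (xs : nat -> pmodel A I) (Hxs : forall j, X (xs j)) :
  exists y, X y /\ exists n : nat -> nat, (forall k, (n k < n (S k))%nat) /\
    is_lim_seq (fun k => Defs.dist e w (xs (n k)) y) 0.
Proof.
  set (a := fun j k => match e k with
          | Some f => if excluded_middle_informative (psat (xs j) f) then true else false
          | None => false end).
  destruct (subseq a) as [n [Hn Hag]].
  assert (Key : forall m k g, (k <= m)%nat -> e k = Some g ->
             (psat (xs (n m)) g <-> bl a k = true)).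
  { intros m k g Hk Hek. rewrite <- (Hag m k Hk). unfold a. rewrite Hek.
    destruct (excluded_middle_informative _); split; intros; auto; congruence. }
  set (G := fun f => exists k g, e k = Some g /\
        ((bl a k = true /\ f = g) \/ (bl a k = false /\ f = Neg g))).
  assert (Hfin : forall l, (forall f, In f l -> G f) -> exists M,
     forall f, In f l -> exists k g, (k <= M)%nat /\ e k = Some g /\
        ((bl a k = true /\ f = g) \/ (bl a k = false /\ f = Neg g))).
  { induction l; intros H.
    - exists 0%nat. intros f [].
    - destruct IHl as [M HM]. { intros f Hf. apply H. simpl; auto. }
      destruct (H a0 (or_introl eq_refl)) as [k [g [Hek Hc]]].
      exists (max M k). intros f [Hf|Hf].
      + subst. exists k, g. split; [lia|auto].
      + destruct (HM f Hf) as [k' [g' [Hk' R']]]. exists k', g'. split; [lia|auto]. }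
  assert (Hcons : consistent L G).
  { intros [l [Hl HLl]]. destruct (Hfin l Hl) as [M HM].
    assert (Hs : forall f, In f l -> psat (xs (n M)) f).
    { intros f Hf. destruct (HM f Hf) as [k [g [Hk [Hek [[Hb ->]|[Hb ->]]]]]].
      - apply (Key M k g Hk Hek). auto.
      - unfold psat; simpl. intro Hg. apply (Key M k g Hk Hek) in Hg. congruence. }
    apply psat_conj in Hs. apply (HX _ (Hxs (n M)) _ HLl). exact Hs. }
  destruct (Hsat G Hcons) as [y [Hy HyG]].
  assert (Ky : forall k g, e k = Some g -> (psat y g <-> bl a k = true)).
  { intros k g Hek. destruct (bl a k) eqn:Hb; split; intros; auto.
    - apply HyG. exists k, g. auto.
    - exfalso. assert (HN : psat y (Neg g)) by (apply HyG; exists k, g; auto).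
      apply HN. auto.
    - congruence. }
  exists y. split; [exact Hy|]. exists n. split; [exact Hn|].
  destruct Hd as [_ [_ [Hw HW]]].
  set (W := fun k => match e k with Some _ => w k | None => 0 end) in *.
  set (u := fun m k => match e k with Some f => w k * disagree (xs (n m)) y f | None => 0 end).
  assert (Hu : forall m k, 0 <= u m k <= W k).
  { intros m k. unfold u, W. destruct (e k) eqn:Hek; [|lra].
    assert (0 < w k) by (apply Hw; congruence).
    unfold disagree. destruct (excluded_middle_informative _); nra. }
  assert (Hu0 : forall m k, (k < S m)%nat -> u m k = 0).
  { intros m k Hk. unfold u. destruct (e k) eqn:Hek; [|reflexivity].
    unfold disagree. destruct (excluded_middle_informative _) as [_|Hne]; [lra|].
    exfalso. apply Hne. rewrite (Key m k f ltac:(lia) Hek). rewrite (Ky k f Hek). tauto. }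
  assert (HWl : is_lim_seq (fun m => sum_f_R0 W m) (Series W)).
  { assert (H := Series_correct _ HW). eapply is_lim_seq_ext. intro. apply sum_n_Reals. exact H. }
  apply is_lim_seq_le_le with (u := fun _ => 0) (w := fun m => Series W - sum_f_R0 W m).
  - intro m. unfold Defs.dist. fold (u m). split.
    + assert (H0 : Series (fun _ : nat => 0) = 0).
      { rewrite (Series_ext (fun _ => 0) (fun k => 0 * W k)) by (intro; ring).
        rewrite Series_scal_l. ring. }
      assert (Hex : ex_series (u m)).
      { apply (ex_series_le (u m) W); [|exact HW]. intro k.
        change (Rabs (u m k) <= W k). rewrite Rabs_pos_eq; apply Hu. }
      rewrite <- H0. apply Series_le; [|exact Hex]. intro k. split; [lra|apply Hu].
    + rewrite (Series_incr_n_aux (u m) (S m)) by (intros; apply Hu0; auto).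
      rewrite (Series_incr_n W (S m)) by (auto with arith || lia).
      simpl pred. ring_simplify.
      apply Series_le. { intro k; apply Hu. }
      apply (ex_series_incr_n W (S m)). exact HW.
  - apply is_lim_seq_const.
  - replace (Finite 0) with (Finite (Series W - Series W)) by (f_equal; ring).
    apply is_lim_seq_minus'; [apply is_lim_seq_const|exact HWl].
Qed.

Theorem proposition8 (A I : Type) (HA : countable A) (HI : finite_type I)
  (L : form A I -> Prop) (HL : normal_logic L) (Hcomp : logically_compact L)
  (X : pmodel A I -> Prop) (HX : modal_space L X) (Hsat : saturated L X)
  (E : amodel A I) (HE : clean L X E)
  (e : nat -> option (form A I)) (w : nat -> R) (Hd : in_D L X e w)
  (x : pmodel A I) (Hx : X x) :
  exists y, X y /\ limit_point e w E x y.
Proof.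
  assert (Hxs : forall j, X (Nat.iter j (upd E) x)).
  { destruct HE as [_ [_ [_ [_ [_ Hc]]]]].
    induction j; simpl; auto. }
  destruct (seq_limit L X HX Hsat e w Hd _ Hxs) as [y [Hy Hl]].
  exists y. split; auto.
Qed.
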